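(* Let $F$ be a commutative field, $1\le h\le n-1$ with $n-h\equiv 1\pmod 2$, and let $K$ be a linear complex of $h$-subspaces in $\mathrm{PG}(n,F)$. Then every $(h-2)$-subspace of $\mathrm{PG}(n,F)$ is contained in a singular $(h-1)$-subspace of $K$.
   Context: A $d$-subspace is a projective subspace of dimension $d$ (the $(-1)$-subspace is the empty set). A linear complex of $h$-subspaces of $\mathrm{PG}(n,F)$ is the set of $h$-subspaces whose Plücker image ($F(v_0\wedge\cdots\wedge v_h)$ for a basis $v_0,\dots,v_h$) lies in a fixed hyperplane of $\mathbb P(\bigwedge^{h+1}F^{n+1})$. An $(h-1)$-subspace $U$ is singular for $K$ if every $h$-subspace containing $U$ belongs to $K$. *)

(* Defs.v *)
From HB Require Import structures.
From mathcomp Require Import all_boot all_order all_algebra.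
Set Implicit Arguments. Unset Strict Implicit. Unset Printing Implicit Defensive.
Import GRing.Theory.
Local Open Scope ring_scope.

(* Projective space PG(n,F) is modelled on V = F^(n+1) = 'rV[F]_(n.+1).
   A projective d-subspace is the row space of a matrix of rank d+1
   (we use square matrices 'M[F]_(n.+1) as representatives of subspaces;
   containment is (U <= W)%MS). *)

Definition plucker (F : fieldType) (n h : nat) (B : 'M[F]_(h.+1, n.+1))
  (S : {set 'I_n.+1}) : F :=
  \det (colsub (fun k : 'I_h.+1 => nth ord0 (enum S) k) B).

(* A hyperplane of P(/\^{h+1} F^{n+1}) is given by its coefficient vector
   c, with respect to the standard basis e_S (#|S| = h+1); it is nonzero. *)
Definition hyperplane_coeffs (F : fieldType) (n h : nat)
  (c : {set 'I_n.+1} -> F) : Prop :=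
  exists S : {set 'I_n.+1}, #|S| = h.+1 /\ c S != 0.

Definition plucker_pairing (F : fieldType) (n h : nat)
  (c : {set 'I_n.+1} -> F) (B : 'M[F]_(h.+1, n.+1)) : F :=
  \sum_(S : {set 'I_n.+1} | #|S| == h.+1) c S * plucker B S.

Definition in_complex (F : fieldType) (n h : nat) (c : {set 'I_n.+1} -> F)
  (W : 'M[F]_(n.+1)) : Prop :=
  exists B : 'M[F]_(h.+1, n.+1), (B == W)%MS /\ plucker_pairing c B = 0.

Definition singular_for (F : fieldType) (n h : nat) (c : {set 'I_n.+1} -> F)
  (U : 'M[F]_(n.+1)) : Prop :=
  forall W : 'M[F]_(n.+1), \rank W = h.+1 -> (U <= W)%MS -> in_complex h c W.

(* Main.v *)
Require Import Defs.
From mathcomp Require Import all_boot all_order all_algebra all_fingroup zify.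
Set Implicit Arguments. Unset Strict Implicit. Unset Printing Implicit Defensive.
Import GRing.Theory.
Local Open Scope ring_scope.
Ltac sh := match goal with |- ?g => idtac g end.
Lemma invol_sum (R : zmodType) (T : finType) (f : T -> T) (t : T -> R) :
  (forall x, f (f x) = x) -> (forall x, f x != x -> t (f x) = - t x) ->
  forall A : {set T}, (forall x, x \in A -> f x \in A) ->
  \sum_(x in A) t x = \sum_(x in A | f x == x) t x.
Proof.
move=> ff tf.
suff H: forall m (A : {set T}), (#|A| <= m)%N -> (forall x, x \in A -> f x \in A) ->
  \sum_(x in A) t x = \sum_(x in A | f x == x) t x by move=> A; apply: H.
elim=> [|m IH] A.
  rewrite leqn0 => /eqP/cards0_eq -> _.
  by rewrite big_set0 big1 // => x; rewrite inE.
move=> hA Af.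
case: (boolP [exists x in A, f x != x]) => [/existsP[x /andP[xA fx]]|]; last first.
  rewrite negb_exists_in => /forallP H.
  by apply: eq_bigl => y; case: (boolP (y \in A)) => //= yA; have := H y; rewrite yA /= negbK.
have fxA := Af x xA.
set A' := A :\ x :\ f x.
rewrite (big_setD1 x) //= (big_setD1 (f x)) /=; last by rewrite !inE fxA fx.
rewrite addrA tf // subrr add0r.
have HA' : (forall y, y \in A' -> f y \in A').
  move=> y; rewrite !inE => /and3P[y1 y2 yA].
  rewrite Af // andbT; apply/andP; split.
    by apply: contra y2 => /eqP e; rewrite -[y]ff e ff.
  by apply: contra y1 => /eqP <-; rewrite ff.
have cA' : (#|A'| <= m)%N.
  have : (#|A'| < #|A|)%N.
    apply: proper_card.
    apply/properP; split; first by apply/subsetP => y; rewrite !inE => /and3P[].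
    by exists x; rewrite // !inE eqxx andbF.
  by move=> h; rewrite -ltnS; apply: leq_trans h hA.
rewrite (IH A' cA' HA').
apply: eq_bigl => y; rewrite !inE.
case: (boolP (f y == y)) => fy; rewrite ?andbF ?andbT //.
have yx : (y != x) by apply: contra fx => /eqP <-.
have yfx : (y != f x) by apply: contraTneq fy => ->; rewrite ff eq_sym.
by rewrite yx yfx.
Qed.

Lemma invol_fixpoint m (s : {perm 'I_m}) : odd m -> (forall i, s (s i) = i) ->
  exists i, s i = i.
Proof.
move=> om ss.
case: (boolP [exists i, s i == i]) => [/existsP[i /eqP]|]; first by exists i.
rewrite negb_exists => /forallP H; exfalso.
have := @invol_sum 'Z_2 _ s (fun _ => 1) ss.
have e1 : (1 : 'Z_2) = -1 by apply/eqP.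
move=> /(_ (fun _ _ => e1) setT (fun x _ => in_setT _)).
rewrite [X in _ = X -> _]big1; last by move=> i; rewrite (negbTE (H i)) andbF.
rewrite sumr_const cardsT card_ord => /eqP.
rewrite Zp_nat => /eqP/(congr1 val) /=.
by rewrite modn2 om.
Qed.

Lemma det_alt_odd (R : comPzRingType) m (A : 'M[R]_m) : odd m ->
  (forall i, A i i = 0) -> (forall i j, A j i = - A i j) -> \det A = 0.
Proof.
move=> om Ad As.
rewrite /determinant.
have := @invol_sum R _ (fun s : {perm 'I_m} => s^-1)%g
  (fun s => (-1) ^+ s * \prod_i A i (s i)) (@invgK _) _ setT (fun x _ => in_setT _).
rewrite (eq_bigl (fun s => true)) => [->|s]; last by rewrite inE.
  apply: big1 => s /andP[_ /eqP ss].
  have [i si] : exists i, s i = i.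
    apply: invol_fixpoint => // i.
    by rewrite -{1}ss permK.
  by rewrite (bigD1 i) //= si Ad mul0r mulr0.
move=> s _.
rewrite odd_permV -mulrN; congr (_ * _).
rewrite (reindex_inj (@perm_inj _ s)) /=.
under eq_bigr => i _ do rewrite permK As.
by rewrite prodrN card_ord -signr_odd om expr1 mulN1r.
Qed.

Definition Bm (F : fieldType) n k (a b : 'rV[F]_n.+1) (xs : 'M_(k, n.+1)) :=
  col_mx (col_mx a b) xs.

Lemma Bm0 (F : fieldType) n k (a b : 'rV[F]_n.+1) (xs : 'M_(k, n.+1)) j : Bm a b xs 0 j = a 0 j.
Proof. rewrite /Bm mxE; case: splitP => i /= Hi; [rewrite mxE; case: splitP => i' /= Hi'; have := ltn_ord i'; rewrite ?(ord1 i') //|].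
all: by exfalso; lia. Qed.
Lemma Bm1 (F : fieldType) n k (a b : 'rV[F]_n.+1) (xs : 'M_(k, n.+1)) j : Bm a b xs 1 j = b 0 j.
Proof. rewrite /Bm mxE; case: splitP => i /= Hi; last by exfalso; move: Hi; rewrite modn_small //; lia.
move: Hi; rewrite modn_small // => Hi.
rewrite mxE; case: splitP => i' /= Hi'; rewrite (ord1 i') //= in Hi' *.
by exfalso; lia. Qed.
Lemma Bm2 (F : fieldType) n k (a b a' b' : 'rV[F]_n.+1) (xs : 'M_(k, n.+1)) i j :
  i != 0 -> i != 1 -> Bm a b xs i j = Bm a' b' xs i j.
Proof.
move=> i0 i1; rewrite /Bm !mxE; case: splitP => i2 //= Hi.
exfalso; move: i0 i1; rewrite -!val_eqE /= ?modn_small // Hi; case: i2 {Hi} => [[|[|m]]] //.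
Qed.

Lemma pp_lin (F : fieldType) n k (c : {set 'I_n.+1} -> F) (i0 : 'I_k.+2) (B1 B2 B3 : 'M[F]_(k.+2, n.+1)) x :
 (forall j, B3 i0 j = x * B1 i0 j + B2 i0 j) ->
 (forall i j, i != i0 -> B1 i j = B3 i j) -> (forall i j, i != i0 -> B2 i j = B3 i j) ->
 plucker_pairing c B3 = x * plucker_pairing c B1 + plucker_pairing c B2.
Proof.
move=> h0 h1 h2; rewrite /plucker_pairing mulr_sumr -big_split; apply: eq_bigr => S _ /=.
rewrite /plucker; set f := (fun k0 : 'I_k.+2 => nth ord0 (enum S) k0).
rewrite (@determinant_multilinear _ _ _ (colsub f B1) (colsub f B2) i0 x 1).
- by rewrite mul1r mulrDr mulrCA.
- by apply/matrixP => i j; rewrite !mxE h0 mul1r.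
- by apply/matrixP => i j; rewrite !mxE h1 // eq_sym neq_lift.
- by apply/matrixP => i j; rewrite !mxE h2 // eq_sym neq_lift.
Qed.

Lemma rank_colsub (F : fieldType) m p q (g : 'I_q -> 'I_p) (B : 'M[F]_(m, p)) :
  (\rank (colsub g B) <= \rank B)%N.
Proof.
rewrite -mxrank_tr -[\rank B]mxrank_tr.
have -> : (colsub g B)^T = rowsub g B^T by apply/matrixP => i j; rewrite !mxE.
exact: mxrankS (rowsub_sub _ _).
Qed.

Lemma pp_rank (F : fieldType) n k (c : {set 'I_n.+1} -> F) (B : 'M[F]_(k.+2, n.+1)) :
  (\rank B < k.+2)%N -> plucker_pairing c B = 0.
Proof.
move=> hr; apply: big1 => S _; rewrite /plucker.
set D := colsub _ B.
have : D \notin unitmx.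
  rewrite -row_free_unit /row_free; apply: contraTN hr => /eqP e.
  by rewrite -leqNgt -{1}e rank_colsub.
rewrite unitmxE unitfE negbK => /eqP ->; exact: mulr0.
Qed.

Definition beta (F : fieldType) n k (c : {set 'I_n.+1} -> F) (xs : 'M[F]_(k, n.+1)) (a b : 'rV[F]_n.+1) :=
  plucker_pairing c (Bm a b xs).

Lemma beta_linl (F : fieldType) n k (c : {set 'I_n.+1} -> F) (xs : 'M[F]_(k, n.+1)) x a1 a2 b :
  beta c xs (x *: a1 + a2) b = x * beta c xs a1 b + beta c xs a2 b.
Proof.
apply: (@pp_lin F n k c 0) => [j|i j i0|i j i0]; first by rewrite !Bm0 !mxE.
- case: (eqVneq i 1) => [->|i1]; first by rewrite !Bm1.
  exact: Bm2.
- case: (eqVneq i 1) => [->|i1]; first by rewrite !Bm1.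
  exact: Bm2.
Qed.

Lemma beta_linr (F : fieldType) n k (c : {set 'I_n.+1} -> F) (xs : 'M[F]_(k, n.+1)) x a b1 b2 :
  beta c xs a (x *: b1 + b2) = x * beta c xs a b1 + beta c xs a b2.
Proof.
apply: (@pp_lin F n k c 1) => [j|i j i0|i j i0]; first by rewrite !Bm1 !mxE.
- case: (eqVneq i 0) => [->|i1]; first by rewrite !Bm0.
  exact: Bm2.
- case: (eqVneq i 0) => [->|i1]; first by rewrite !Bm0.
  exact: Bm2.
Qed.

Lemma lin_expand (F : fieldType) N (g : 'rV[F]_N -> F) :
  (forall x a1 a2, g (x *: a1 + a2) = x * g a1 + g a2) ->
  forall a, g a = \sum_j a 0 j * g (delta_mx 0 j).
Proof.
move=> gl a.
have g0 : g 0 = 0.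
  have := gl 1 0 0; rewrite scale1r addr0 mul1r -{1}[g 0]addr0 => /addrI.
  by move/esym.
have {1}-> : a = \sum_j a 0 j *: delta_mx 0 j.
  by rewrite {1}[a]matrix_sum_delta big_ord1.
apply: (big_rec2 (fun u y => g u = y)) => // j y u _ <-.
by rewrite gl.
Qed.

Lemma sub_colmxl (F : fieldType) m1 m2 n (A : 'M[F]_(m1, n)) (B : 'M_(m2, n)) : (A <= col_mx A B)%MS.
Proof. by rewrite -addsmxE addsmxSl. Qed.
Lemma sub_colmxr (F : fieldType) m1 m2 n (A : 'M[F]_(m1, n)) (B : 'M_(m2, n)) : (B <= col_mx A B)%MS.
Proof. by rewrite -addsmxE addsmxSr. Qed.

Lemma Bm_sub (F : fieldType) n k (a b : 'rV[F]_n.+1) (xs : 'M_(k, n.+1)) :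
  [/\ (a <= Bm a b xs)%MS, (b <= Bm a b xs)%MS & (xs <= Bm a b xs)%MS].
Proof.
rewrite /Bm; split.
- exact: submx_trans (sub_colmxl a b) (sub_colmxl _ _).
- exact: submx_trans (sub_colmxr a b) (sub_colmxl _ _).
- exact: sub_colmxr.
Qed.

Lemma beta_deg (F : fieldType) n k (c : {set 'I_n.+1} -> F) (xs : 'M[F]_(k, n.+1)) a b :
  (a <= b + xs)%MS -> beta c xs a b = 0.
Proof.
move=> hab; apply: pp_rank.
have : (Bm a b xs <= b + xs)%MS.
  by rewrite /Bm !col_mx_sub hab addsmxSl addsmxSr.
move/mxrankS => h; apply: (leq_ltn_trans h).
apply: (leq_ltn_trans (mxrank_adds_leqif b xs).1).
by rewrite ltnS; exact: leq_add (rank_leq_row b) (rank_leq_row xs).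
Qed.

Definition betaM (F : fieldType) n k (c : {set 'I_n.+1} -> F) (xs : 'M[F]_(k, n.+1)) : 'M[F]_n.+1 :=
  \matrix_(i, j) beta c xs (delta_mx 0 i) (delta_mx 0 j).


Lemma beta_mx (F : fieldType) n k (c : {set 'I_n.+1} -> F) (xs : 'M[F]_(k, n.+1)) a b :
  beta c xs a b = (a *m betaM c xs *m b^T) 0 0.
Proof.
rewrite (@lin_expand _ _ (fun a : 'rV[F]_n.+1 => beta c xs a b) (fun x a1 a2 => beta_linl c xs x a1 a2 b)).
under eq_bigr => i _ do rewrite (@lin_expand _ _ (fun b : 'rV[F]_n.+1 => beta c xs (delta_mx 0 i) b) (fun x b1 b2 => beta_linr c xs x _ b1 b2)).
rewrite mxE; under [RHS]eq_bigr => j _ do rewrite !mxE big_distrl.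
rewrite exchange_big /=; apply: eq_bigr => i _; rewrite big_distrr; apply: eq_bigr => j _.
by rewrite !mxE /= mulrCA mulrC.
Qed.

Lemma beta_anti (F : fieldType) n k (c : {set 'I_n.+1} -> F) (xs : 'M[F]_(k, n.+1)) a b :
  beta c xs b a = - beta c xs a b.
Proof.
have hd : forall u : 'rV[F]_n.+1, beta c xs u u = 0.
  by move=> u; apply: beta_deg; apply: addsmxSl.
have := hd (1 *: a + b).
rewrite beta_linl beta_linr beta_linr !mul1r ?scale1r !hd add0r addr0 addrC.
by move/eqP; rewrite addr_eq0 => /eqP.
Qed.

Lemma gen_entry (F : fieldType) n k (c : {set 'I_n.+1} -> F) (xs : 'M[F]_(k, n.+1)) p q
  (A : 'M[F]_(p, n.+1)) (B : 'M[F]_(q, n.+1)) i j :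
  (A *m betaM c xs *m B^T) i j = beta c xs (row i A) (row j B).
Proof.
rewrite beta_mx !mxE; apply: eq_bigr => l _; rewrite !mxE; congr (_ * _).
by apply: eq_bigr => p' _; rewrite !mxE.
Qed.

Lemma row0_rV (F : fieldType) N (v : 'rV[F]_N) : row 0 v = v.
Proof. by apply/matrixP => i j; rewrite (ord1 i) mxE. Qed.

Lemma main (F : fieldType) n k (c : {set 'I_n.+1} -> F) (xs : 'M[F]_(k, n.+1)) (X : 'M[F]_(n.+1)) :
  row_free xs -> (xs :=: X)%MS -> odd (n.+1 - k) ->
  exists U : 'M[F]_(n.+1), [/\ \rank U = k.+1, (X <= U)%MS & singular_for k.+1 c U].
Proof.
move=> fxs eX odk.
set M := betaM c xs.
set C := row_base (xs^C)%MS.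
have rxs : \rank xs = k := eqP fxs.
have om : odd (\rank (xs^C)%MS) by rewrite mxrank_compl rxs.
set Q := C *m M *m C^T.
have Qe : forall i j, Q i j = beta c xs (row i C) (row j C) by move=> i j; apply: gen_entry.
have /det0P[u u0 uQ] : \det Q == 0.
  apply/eqP; apply: det_alt_odd => // [i|i j]; rewrite !Qe.
    by apply: beta_deg; apply: addsmxSl.
  exact: beta_anti.
set v := u *m C.
have v0 : v != 0 by rewrite /v mulmx_free_eq0 // row_base_free.
have vM : v *m M = 0.
  set y := v *m M.
  have y1 : y *m C^T = 0 by rewrite -uQ /y /v /Q !mulmxA.
  have y2 : y *m xs^T = 0.
    apply/matrixP => i j; rewrite (ord1 i) [RHS]mxE /y gen_entry row0_rV beta_anti.
    rewrite beta_deg ?oppr0 //; apply: submx_trans (addsmxSr v xs); exact: row_sub.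
  have hf : (1%:M <= col_mx xs C)%MS.
    by rewrite -addsmxE (adds_eqmx (eqmx_refl xs) (eq_row_base _)) sub1mx addsmx_compl_full.
  have y3 : y *m (col_mx xs C)^T = 0 by rewrite tr_col_mx mul_mx_row y1 y2 row_mx0.
  case/submxP: hf => D hD.
  by rewrite -[y]mulmx1 -trmx1 hD trmx_mul mulmxA y3 mul0mx.
have vX : ~~ (v <= xs)%MS.
  apply/negP => vx.
  have : (v <= xs :&: xs^C)%MS.
    by rewrite sub_capmx vx /= -(eq_row_base (xs^C)%MS) submxMl.
  by rewrite capmx_compl submx0 (negbTE v0).
set U := (xs + v)%MS.
have hlt : (xs < U)%MS.
  rewrite ltmxE addsmxSl /=; apply: contra vX; exact: submx_trans (addsmxSr xs v).
have rU : \rank U = k.+1.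
  apply/eqP; rewrite eqn_leq; apply/andP; split.
    apply: leq_trans (mxrank_adds_leqif xs v).1 _.
    by rewrite rxs -(addn1 k) leq_add2l rank_leq_row.
  by rewrite -rxs; apply: rank_ltmx.
exists U; split => //; first by rewrite -eX addsmxSl.
move=> W rW UW.
have [i wi] : exists i, ~~ (row i W <= U)%MS.
  case: (pickP (fun i => ~~ (row i W <= U)%MS)) => [i wi|none]; first by exists i.
  exfalso; have : (W <= U)%MS by apply/row_subP => i; have := none i => /negbFE.
  by move/mxrankS; rewrite rW rU ltnn.
set w := row i W.
exists (Bm v w xs).
have [Bv Bw Bx] := Bm_sub v w xs.
have sB : (Bm v w xs <= W)%MS.
  rewrite /Bm !col_mx_sub (row_sub i W) andbT.
  by apply/andP; split; apply: submx_trans _ UW; [exact: addsmxSr | exact: addsmxSl].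
have rB : (k.+2 <= \rank (Bm v w xs))%N.
  have sUw : ((U + w)%MS <= Bm v w xs)%MS by rewrite !addsmx_sub Bv Bw Bx.
  have : (U < U + w)%MS.
    rewrite ltmxE addsmxSl /=; apply: contra wi; exact: submx_trans (addsmxSr U w).
  move/rank_ltmx; rewrite rU => h; exact: leq_trans h (mxrankS sUw).
have rB2 : (\rank (Bm v w xs) <= k.+2)%N := rank_leq_row _.
split; last by rewrite /= -/(beta c xs v w) beta_mx vM mul0mx mxE.
apply/andP; split => //.
have := mxrank_leqif_sup sB => -[_ <-].
by rewrite rW eqn_leq rB rB2.
Qed.

Unset Implicit Arguments.
Theorem proposition6p2 (F : fieldType) (n h : nat) (c : {set 'I_n.+1} -> F) :
  (1 <= h)%N -> (h <= n.-1)%N -> odd (n - h) ->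
  hyperplane_coeffs h c ->
  forall X : 'M[F]_(n.+1), \rank X = h.-1 ->
  exists U : 'M[F]_(n.+1),
    [/\ \rank U = h, (X <= U)%MS & singular_for h c U].
Proof.
case: h => [//|k] _ hn onh _ X rX.
have := @main F n (\rank X) c (row_base X) X (row_base_free X) (eq_row_base X).
rewrite rX /=; apply.
have -> : (n.+1 - k = (n - k.+1).+2)%N by lia.
by rewrite /= negbK.
Qed.
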